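(* Let $V=\{n\in\mathbb{Z} : n\geq 2,\ 5\nmid n\}$ and let $\Gamma_5$ be the directed graph with vertex set $V$ whose edges are the up-edges $(n,(n+5)^2)$ for $n\in V$ and the down-edges $(n^2,n)$ for $n\in V$. Then $\Gamma_5$ is connected: for any $x,y\in V$ there is a directed path in $\Gamma_5$ from $x$ to $y$.
   Context: A directed path from $x$ to $y$ is a finite sequence of vertices $x=v_0,v_1,\dots,v_m=y$ such that each $(v_{j-1},v_j)$ is an edge of $\Gamma_5$. *)

(* Defs.v *)
From Stdlib Require Import ZArith List.
Open Scope Z_scope.

Definition inV (n : Z) : Prop := 2 <= n /\ ~ (5 | n)%Z.

Definition edge5 (a b : Z) : Prop :=
  (inV a /\ b = (a + 5) ^ 2) \/ (inV b /\ a = b ^ 2).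

(* A directed path x = v_0, v_1, ..., v_m = y, given as the list [v_1; ...; v_m]
   of vertices after the start x. *)
Fixpoint is_path (x : Z) (l : list Z) (y : Z) : Prop :=
  match l with
  | nil => x = y
  | v :: l' => edge5 x v /\ is_path v l' y
  end.

(* Main.v *)
Require Import Defs.
From Stdlib Require Import ZArith List Lia.
Open Scope Z_scope.

Definition R x y := exists l, is_path x l y.

Lemma path_app : forall l1 x y l2 z, is_path x l1 y -> is_path y l2 z -> is_path x (l1 ++ l2) z.
Proof.
  induction l1 as [|v l IH]; simpl; intros x y l2 z H1 H2.
  - subst; exact H2.
  - destruct H1 as [He Hp]. split; [exact He| eapply IH; eauto].
Qed.

Lemma R_trans x y z : R x y -> R y z -> R x z.
Proof. intros [l1 H1] [l2 H2]. exists (l1 ++ l2). eapply path_app; eauto. Qed.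

Lemma R_up n : inV n -> R n ((n+5)^2).
Proof. intros H. exists ((n+5)^2 :: nil). simpl. split; [left; auto | reflexivity]. Qed.

Lemma R_down k : inV k -> R (k^2) k.
Proof. intros H. exists (k :: nil). simpl. split; [right; auto | reflexivity]. Qed.

Lemma inV_mod n : 2 <= n -> n mod 5 <> 0 -> inV n.
Proof.
  intros H1 H2. split; auto. intro Hd. apply H2. apply Z.mod_divide; [lia|exact Hd].
Qed.

Lemma inV_mod' n : inV n -> n mod 5 <> 0.
Proof.
  intros [H1 H2] H. apply H2. apply Z.mod_divide; [lia|exact H].
Qed.

Lemma modp5 a : (a + 5) mod 5 = a mod 5.
Proof. replace (a+5) with (a + 1*5) by ring. apply Z_mod_plus_full. Qed.

Lemma mod_sq a : (a^2) mod 5 = ((a mod 5)^2) mod 5.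
Proof. rewrite !Z.pow_2_r. apply Z.mul_mod. lia. Qed.

Lemma inV_plus5 n : inV n -> inV (n+5).
Proof.
  intros H. pose proof (inV_mod' n H). destruct H. apply inV_mod; [lia|]. rewrite modp5; auto.
Qed.

Lemma R_plus5 n : inV n -> R n (n+5).
Proof.
  intros H. eapply R_trans. apply R_up, H. apply R_down, inV_plus5, H.
Qed.

Lemma R_plus5k : forall k : nat, forall n, inV n -> R n (n + 5 * Z.of_nat k) /\ inV (n + 5 * Z.of_nat k).
Proof.
  induction k as [|k IH]; intros n H.
  - replace (n + 5 * Z.of_nat 0) with n by lia. split; [exists nil; reflexivity | exact H].
  - destruct (IH n H) as [H1 H2].
    replace (n + 5 * Z.of_nat (S k)) with ((n + 5 * Z.of_nat k) + 5) by lia.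
    split; [eapply R_trans; [exact H1| apply R_plus5; exact H2] | apply inV_plus5; exact H2].
Qed.

Lemma cong_ex n m : n <= m -> m mod 5 = n mod 5 -> exists k : nat, m = n + 5 * Z.of_nat k.
Proof.
  intros H1 H2. exists (Z.to_nat ((m - n) / 5)).
  assert (Hm : (m - n) mod 5 = 0).
  { rewrite Zminus_mod, H2, Z.sub_diag. reflexivity. }
  pose proof (Z.div_mod (m - n) 5 ltac:(lia)) as Hd.
  assert (0 <= (m - n) / 5) by (apply Z.div_pos; lia).
  rewrite Z2Nat.id by lia. lia.
Qed.

Lemma R_cong n m : inV n -> n <= m -> m mod 5 = n mod 5 -> R n m.
Proof.
  intros H H1 H2. destruct (cong_ex n m H1 H2) as [k ->]. apply R_plus5k, H.
Qed.

Lemma class1 : forall k : nat, R (6 + 5 * Z.of_nat k) 6.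
Proof.
  induction k as [|k IH].
  - exists nil. simpl. lia.
  - set (j := 6 + 5 * Z.of_nat k) in *.
    assert (Hj : inV j).
    { apply inV_mod; [unfold j; lia|]. unfold j.
      replace (6 + 5 * Z.of_nat k) with (1 + (1 + Z.of_nat k) * 5) by ring.
      rewrite Z_mod_plus_full. discriminate. }
    set (m := 6 + 5 * Z.of_nat (S k)).
    assert (Hmm : m mod 5 = 1).
    { unfold m. replace (6 + 5 * Z.of_nat (S k)) with (1 + (1 + Z.of_nat (S k)) * 5) by ring.
      rewrite Z_mod_plus_full. reflexivity. }
    eapply R_trans; [| eapply R_trans; [apply (R_down j Hj) | exact IH]].
    apply R_cong.
    + apply inV_mod; [unfold m; lia| rewrite Hmm; discriminate].
    + unfold m, j. nia.
    + rewrite Hmm. unfold j.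
      replace ((6 + 5 * Z.of_nat k) ^ 2) with (1 + (7 + 12 * Z.of_nat k + 5 * Z.of_nat k ^ 2) * 5) by ring.
      rewrite Z_mod_plus_full. reflexivity.
Qed.

Lemma class1' m : 6 <= m -> m mod 5 = 1 -> R m 6.
Proof.
  intros H1 H2. destruct (cong_ex 6 m H1 H2) as [k ->]. apply class1.
Qed.

Lemma mod_cases x : inV x -> x mod 5 = 1 \/ x mod 5 = 2 \/ x mod 5 = 3 \/ x mod 5 = 4.
Proof.
  intros H. pose proof (inV_mod' x H). pose proof (Z.mod_pos_bound x 5 ltac:(lia)). lia.
Qed.

Lemma to6 x : inV x -> R x 6.
Proof.
  intros H. pose proof (mod_cases x H) as Hc. destruct H as [H2 H5].
  assert (Hy : inV ((x+5)^2)).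
  { apply inV_mod; [nia|]. rewrite mod_sq, modp5.
    destruct Hc as [E|[E|[E|E]]]; rewrite E; discriminate. }
  eapply R_trans; [apply R_up; split; auto|].
  eapply R_trans; [apply R_up, Hy|].
  apply class1'; [nia|].
  rewrite mod_sq, modp5, (mod_sq (x+5)), modp5.
  destruct Hc as [E|[E|[E|E]]]; rewrite E; reflexivity.
Qed.

Lemma from6 y : inV y -> R 6 y.
Proof.
  intros H. pose proof (mod_cases y H) as Hc.
  assert (Hy2 : 2 <= y) by (destruct H; lia).
  eapply R_trans; [|apply R_down, H].
  destruct Hc as [E|[E|[E|E]]].
  - apply R_cong; [apply inV_mod; [lia|discriminate] | |].
    + assert (y <> 2) by (intro; subst; discriminate). nia.
    + rewrite mod_sq, E. reflexivity.
  - assert (R 6 4).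
    { eapply R_trans; [apply (R_cong 6 16)|].
      - apply inV_mod; [lia|discriminate].
      - lia.
      - reflexivity.
      - change 16 with (4^2). apply R_down, inV_mod; [lia|discriminate]. }
    eapply R_trans; [exact H0|]. apply R_cong; [apply inV_mod; [lia|discriminate]| nia |].
    rewrite mod_sq, E. reflexivity.
  - assert (R 6 4).
    { eapply R_trans; [apply (R_cong 6 16)|].
      - apply inV_mod; [lia|discriminate].
      - lia.
      - reflexivity.
      - change 16 with (4^2). apply R_down, inV_mod; [lia|discriminate]. }
    eapply R_trans; [exact H0|]. apply R_cong; [apply inV_mod; [lia|discriminate]| nia |].
    rewrite mod_sq, E. reflexivity.
  - apply R_cong; [apply inV_mod; [lia|discriminate] | |].
    + assert (y <> 2) by (intro; subst; discriminate). nia.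
    + rewrite mod_sq, E. reflexivity.
Qed.

Theorem theorem5 :
  forall x y : Z, inV x -> inV y -> exists l : list Z, is_path x l y.
Proof.
  intros x y Hx Hy. exact (R_trans _ _ _ (to6 x Hx) (from6 y Hy)).
Qed.
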